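(* Let $X$ be a real Banach space, $A$ a non-empty subset of $X$, and $F_1,F_2$ non-empty closed bounded subsets of $X$. (1) Suppose $r(F_1,x)>r(F_2,x)$ for each $x\in A$. If $F_1$ is remotal (respectively uniquely remotal, strongly remotal, SUR, sup-compact) on $A$, then $F_1\cup F_2$ is remotal (respectively uniquely remotal, strongly remotal, SUR, sup-compact) on $A$. If in addition $\inf\{r(F_1,x)-r(F_2,x):x\in A\}>0$ and $F_1$ is USUR on $A$, then $F_1\cup F_2$ is USUR on $A$. (2) If $r(F_1,x)=r(F_2,x)$ for each $x\in A$ and $F_1,F_2$ are both sup-compact (respectively strongly remotal, remotal) on $A$, then $F_1\cup F_2$ is sup-compact (respectively strongly remotal, remotal) on $A$.
   Context: $B_X$ is the closed unit ball. For non-empty bounded $F$, $x\in X$, $\delta\ge0$: $r(F,x)=\sup_{y\in F}\|x-y\|$, $Q_F(x,\delta)=\{y\in F:\|x-y\|\ge r(F,x)-\delta\}$, $Q_F(x)=Q_F(x,0)$. On a set $A$, $F$ is: remotal if $Q_F(x)\neq\emptyset$ for each $x\in A$; uniquely remotal if $Q_F(x)$ is a singleton for each $x\in A$; strongly remotal if for every $x\in A$ and $\epsilon>0$ there is $\delta>0$ with $Q_F(x,\delta)\subseteq Q_F(x)+\epsilon B_X$; SUR if both uniquely remotal and strongly remotal; USUR if uniquely remotal and for every $\epsilon>0$ there is $\delta>0$ with $Q_F(x,\delta)\subseteq Q_F(x)+\epsilon B_X$ for all $x\in A$; sup-compact if for each $x\in A$ every sequence $(y_n)$ in $F$ with $\|x-y_n\|\to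 r(F,x)$ has a subsequence converging to an element of $F$. *)

(* Defs.v *)
From HB Require Import structures.
From mathcomp Require Import all_boot all_order all_algebra.
From mathcomp Require Import all_classical all_reals all_analysis.
Set Implicit Arguments. Unset Strict Implicit. Unset Printing Implicit Defensive.
Import Order.TTheory GRing.Theory Num.Theory.
Import numFieldNormedType.Exports.
Local Open Scope classical_set_scope.
Local Open Scope ring_scope.

Section Remotal.
Variables (R : realType) (X : normedModType R).

Definition farthest_dist (F : set X) (x : X) : R :=
  sup [set `|x - y| | y in F].

Definition farthest_pts (F : set X) (x : X) (delta : R) : set X :=
  [set y | F y /\ farthest_dist F x - delta <= `|x - y|].

Definition farthest_set (F : set X) (x : X) : set X := farthest_pts F x 0.

Definition enlarge (S : set X) (eps : R) : set X :=
  [set z | exists2 q, S q & `|z - q| <= eps].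

Definition remotal_on (F A : set X) : Prop :=
  forall x, A x -> farthest_set F x !=set0.

Definition uniquely_remotal_on (F A : set X) : Prop :=
  forall x, A x -> exists y, farthest_set F x = [set y].

Definition strongly_remotal_on (F A : set X) : Prop :=
  forall x, A x -> forall eps : R, 0 < eps ->
    exists2 delta : R, 0 < delta &
      farthest_pts F x delta `<=` enlarge (farthest_set F x) eps.

Definition SUR_on (F A : set X) : Prop :=
  uniquely_remotal_on F A /\ strongly_remotal_on F A.

Definition USUR_on (F A : set X) : Prop :=
  uniquely_remotal_on F A /\
  forall eps : R, 0 < eps ->
    exists2 delta : R, 0 < delta &
      forall x, A x -> farthest_pts F x delta `<=` enlarge (farthest_set F x) eps.

Definition sup_compact_on (F A : set X) : Prop :=
  forall x, A x -> forall u : nat -> X, (forall n, F (u n)) ->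
    (fun n => `|x - u n|) @ \oo --> farthest_dist F x ->
    exists phi : nat -> nat, {homo phi : m n / (m < n)%N >-> (m < n)%N} /\
      exists2 y, F y & (u \o phi) @ \oo --> y.

End Remotal.

(* Main.v *)
Require Import Defs.
From HB Require Import structures.
From mathcomp Require Import all_boot all_order all_algebra.
From mathcomp Require Import all_classical all_reals all_analysis.
Import Order.TTheory GRing.Theory Num.Theory.
Import numFieldNormedType.Exports.
Local Open Scope classical_set_scope.
Local Open Scope ring_scope.

From mathcomp Require Import lra.
Section H.
Context {R : realType} {X : normedModType R}.

Definition bdd (F : set X) := exists M : R, forall y, F y -> `|y| <= M.

Lemma bdd_of (F : set X) : bounded_set F -> bdd F.
Proof.
move=> [M [_ HM]]; exists (M + 1) => y Fy.
by apply: (HM (M + 1)) => //; rewrite ltrDl.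
Qed.

Lemma bddU (F G : set X) : bdd F -> bdd G -> bdd (F `|` G).
Proof.
move=> [M HM] [N HN]; exists (Num.max M N) => y [/HM|/HN] h.
  by rewrite le_max h.
by rewrite le_max h orbT.
Qed.

Lemma fd_ub (F : set X) x y : bdd F -> F y -> `|x - y| <= farthest_dist F x.
Proof.
move=> [M HM] Fy; apply: sup_upper_bound; last by exists y.
split; first by exists `|x - y|, y.
exists (`|x| + M) => _ [z Fz <-].
by rewrite (le_trans (ler_normB _ _))// lerD2l HM.
Qed.

Lemma fd_le (F : set X) x c : F !=set0 -> (forall y, F y -> `|x - y| <= c) ->
  farthest_dist F x <= c.
Proof.
move=> [y Fy] H; apply: ge_sup; first by exists `|x - y|, y.
by move=> _ [z Fz <-]; exact: H.
Qed.

Lemma fd_gt (F : set X) x e : F !=set0 -> e < farthest_dist F x ->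
  exists2 y, F y & e < `|x - y|.
Proof.
move=> [y Fy] /sup_gt[]; first by exists `|x - y|, y.
by move=> _ [z Fz <-] h; exists z.
Qed.

Lemma fdU (F G : set X) x : F !=set0 -> G !=set0 -> bdd F -> bdd G ->
  farthest_dist (F `|` G) x = Num.max (farthest_dist F x) (farthest_dist G x).
Proof.
move=> nF nG bF bG; apply/le_anti/andP; split.
  apply: fd_le; first by case: nF => y Fy; exists y; left.
  move=> y [Fy|Gy]; rewrite le_max.
    by rewrite fd_ub.
  by rewrite (@fd_ub G x y bG Gy) orbT.
rewrite ge_max; apply/andP; split; apply: fd_le => // y Hy; apply: fd_ub.
- exact: bddU.
- by left.
- exact: bddU.
- by right.
Qed.


Lemma Q1 (F G : set X) x d : F !=set0 -> G !=set0 -> bdd F -> bdd G -> 0 <= d ->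
  farthest_dist G x < farthest_dist F x - d ->
  farthest_pts (F `|` G) x d = farthest_pts F x d.
Proof.
move=> nF nG bF bG d0 hlt.
have hle : farthest_dist G x <= farthest_dist F x.
  by apply: (le_trans (ltW hlt)); rewrite lerBlDr lerDl.
rewrite /farthest_pts fdU // max_l //; apply/seteqP; split => y /= [Hy Hle].
  case: Hy => // Gy; exfalso.
  have := @fd_ub G x y bG Gy => h.
  by have := lt_le_trans (le_lt_trans h hlt) Hle; rewrite ltxx.
by split => //; left.
Qed.

Lemma Q2 (F G : set X) x d : F !=set0 -> G !=set0 -> bdd F -> bdd G ->
  farthest_dist F x = farthest_dist G x ->
  farthest_pts (F `|` G) x d = farthest_pts F x d `|` farthest_pts G x d.
Proof.
move=> nF nG bF bG he.
rewrite /farthest_pts fdU // he maxxx; apply/seteqP; split => y /=.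
  by move=> [[Fy|Gy] Hle]; [left|right]; rewrite ?he.
move=> [[Fy Hle]|[Gy Hle]]; split => //; try by [left|right].
Qed.

Lemma enlargeS (S T : set X) e : S `<=` T -> enlarge S e `<=` enlarge T e.
Proof. by move=> ST z [q Sq h]; exists q => //; apply: ST. Qed.

Lemma homo_ge {phi : nat -> nat} : {homo phi : m n / (m < n)%N} -> forall n, (n <= phi n)%N.
Proof.
move=> h; elim=> // n IH; apply: leq_ltn_trans IH _; exact: h.
Qed.

Lemma subseq_cvg (T : topologicalType) (u : nat -> T) phi (l : T) :
  {homo phi : m n / (m < n)%N} -> u @ \oo --> l -> (u \o phi) @ \oo --> l.
Proof.
move=> hphi hu.
have hp : phi @ \oo --> \oo.
  move=> P [N _ HP]; exists N => // n /= Nn; apply: HP.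
  exact: leq_trans Nn (homo_ge hphi n).
exact: cvg_comp hp hu.
Qed.

Lemma extract (P : nat -> Prop) : (forall N, exists n, (N <= n)%N /\ P n) ->
  exists psi : nat -> nat, {homo psi : m n / (m < n)%N} /\ forall k, P (psi k).
Proof.
move=> /choice[g hg].
pose psi := fix psi k := if k is k'.+1 then g (psi k').+1 else g 0%N.
exists psi; split; last by case=> [|k]; apply: (proj2 (hg _)).
apply: homo_ltn; first by move=> ? ? ?; exact: ltn_trans.
by move=> i /=; case: (hg (psi i).+1).
Qed.

Lemma sc_freq (F A : set X) x (u : nat -> X) : sup_compact_on F A -> A x ->
  (forall N, exists n, (N <= n)%N /\ F (u n)) ->
  (fun n => `|x - u n|) @ \oo --> farthest_dist F x ->
  exists phi : nat -> nat, {homo phi : m n / (m < n)%N >-> (m < n)%N} /\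
      exists2 y, F y & (u \o phi) @ \oo --> y.
Proof.
move=> hF Ax /extract[psi [hpsi Fpsi]] hc.
have := hF x Ax (u \o psi) Fpsi (@subseq_cvg _ _ psi _ hpsi hc).
move=> [phi [hphi [y Fy hy]]].
exists (psi \o phi); split; last by exists y.
by move=> m n mn; apply: hpsi; apply: hphi.
Qed.


Lemma fpS (F : set X) x d d' : d <= d' -> farthest_pts F x d `<=` farthest_pts F x d'.
Proof. by move=> dd y [Fy h]; split => //; apply: le_trans h; rewrite lerD2l lerN2. Qed.

End H.

Theorem theorem2p10 (R : realType) (X : completeNormedModType R)
    (A F1 F2 : set X) :
  A !=set0 ->
  F1 !=set0 -> closed F1 -> bounded_set F1 ->
  F2 !=set0 -> closed F2 -> bounded_set F2 ->
  (* (1) *)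
  ((forall x, A x -> farthest_dist F2 x < farthest_dist F1 x) ->
     (remotal_on F1 A -> remotal_on (F1 `|` F2) A) /\
     (uniquely_remotal_on F1 A -> uniquely_remotal_on (F1 `|` F2) A) /\
     (strongly_remotal_on F1 A -> strongly_remotal_on (F1 `|` F2) A) /\
     (SUR_on F1 A -> SUR_on (F1 `|` F2) A) /\
     (sup_compact_on F1 A -> sup_compact_on (F1 `|` F2) A) /\
     (0 < inf [set farthest_dist F1 x - farthest_dist F2 x | x in A] ->
        USUR_on F1 A -> USUR_on (F1 `|` F2) A)) /\
  (* (2) *)
  ((forall x, A x -> farthest_dist F1 x = farthest_dist F2 x) ->
     (sup_compact_on F1 A -> sup_compact_on F2 A ->
        sup_compact_on (F1 `|` F2) A) /\
     (strongly_remotal_on F1 A -> strongly_remotal_on F2 A ->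
        strongly_remotal_on (F1 `|` F2) A) /\
     (remotal_on F1 A -> remotal_on F2 A -> remotal_on (F1 `|` F2) A)).
Proof.
move=> nA nF1 _ /bdd_of b1 nF2 _ /bdd_of b2; split.
  move=> hlt.
  have Qe x d : A x -> 0 <= d -> d < farthest_dist F1 x - farthest_dist F2 x ->
      farthest_pts (F1 `|` F2) x d = farthest_pts F1 x d.
    move=> Ax d0 dlt; apply: Q1 => //; lra.
  have Q0 x : A x -> farthest_set (F1 `|` F2) x = farthest_set F1 x.
    move=> Ax; apply: Qe => //; have := hlt x Ax; lra.
  have hrem : remotal_on F1 A -> remotal_on (F1 `|` F2) A.
    by move=> h x Ax; rewrite Q0 //; exact: h.
  have huni : uniquely_remotal_on F1 A -> uniquely_remotal_on (F1 `|` F2) A.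
    by move=> h x Ax; rewrite Q0 //; exact: h.
  have hstr : strongly_remotal_on F1 A -> strongly_remotal_on (F1 `|` F2) A.
    move=> h x Ax e e0; have [d d0 hd] := h x Ax e e0.
    have hx := hlt x Ax.
    exists (Num.min d ((farthest_dist F1 x - farthest_dist F2 x) / 2)).
      by rewrite lt_min d0 /=; lra.
    rewrite Qe //; last by rewrite gt_min; apply/orP; right; lra.
      by rewrite Q0 //; apply: subset_trans hd; apply: fpS; rewrite ge_min lexx.
    by rewrite le_min (ltW d0) /=; lra.
  split; first exact: hrem. split; first exact: huni. split; first exact: hstr. split.
    by move=> [/huni ? /hstr ?].
  split.
    move=> h x Ax u Fu hc.
    have hx := hlt x Ax.
    rewrite fdU // max_l ?(ltW hx) // in hc.
    have [N _ HN] := cvgr_gt _ hc _ hx.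
    have fr : forall M, exists n, (M <= n)%N /\ F1 (u n).
      move=> M; exists (maxn M N); split; first exact: leq_maxl.
      case: (Fu (maxn M N)) => // F2u; exfalso.
      have := HN (maxn M N) (leq_maxr _ _); rewrite /=.
      have := @fd_ub _ _ F2 x _ b2 F2u; lra.
    have [phi [hphi [y Fy hy]]] := @sc_freq _ _ _ _ _ _ h Ax fr hc.
    by exists phi; split => //; exists y => //; left.
  move=> hinf [hu hus]; split; first exact: huni.
  set S := [set _ | _ in A] in hinf.
  have hl : has_lbound S.
    apply: contrapT => nl; suff : inf S = 0 by move=> h0; rewrite h0 ltxx in hinf.
    by apply: inf_out => -[].
  have hc x : A x -> inf S <= farthest_dist F1 x - farthest_dist F2 x.
    by move=> Ax; apply: ge_inf => //; exists x.
  move=> e e0; have [d d0 hd] := hus e e0.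
  exists (Num.min d (inf S / 2)); first by rewrite lt_min d0 /=; lra.
  move=> x Ax; have := hc x Ax => hcx.
  rewrite Qe //; last by rewrite gt_min; apply/orP; right; lra.
    by rewrite Q0 //; apply: subset_trans (hd x Ax); apply: fpS; rewrite ge_min lexx.
  by rewrite le_min (ltW d0) /=; lra.
move=> heq; split.
  move=> h1 h2 x Ax u Fu hc.
  rewrite fdU // -heq // maxxx in hc.
  case: (pselect (forall N, exists n, (N <= n)%N /\ F1 (u n))) => [fr|nfr].
    have [phi [hphi [y Fy hy]]] := @sc_freq _ _ _ _ _ _ h1 Ax fr hc.
    by exists phi; split => //; exists y => //; left.
  have [N0 hN0] : exists N0, ~ exists n, (N0 <= n)%N /\ F1 (u n).
    apply: contrapT => h; apply: nfr => N; apply: contrapT => h'; apply: h.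
    by exists N.
  have fr : forall N, exists n, (N <= n)%N /\ F2 (u n).
    move=> N; exists (maxn N N0); split; first exact: leq_maxl.
    case: (Fu (maxn N N0)) => // F1u; exfalso; apply: hN0.
    by exists (maxn N N0); split => //; exact: leq_maxr.
  rewrite heq // in hc.
  have [phi [hphi [y Fy hy]]] := @sc_freq _ _ _ _ _ _ h2 Ax fr hc.
  by exists phi; split => //; exists y => //; right.
split.
  move=> h1 h2 x Ax e e0.
  have [d1 d10 hd1] := h1 x Ax e e0; have [d2 d20 hd2] := h2 x Ax e e0.
  exists (Num.min d1 d2); first by rewrite lt_min d10 d20.
  rewrite /farthest_set !Q2 ?heq //.
  move=> y [hy|hy].
    apply: (enlargeS _ _ _ (@subsetUl _ _ _)); apply: hd1; apply: fpS hy.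
    by rewrite ge_min lexx.
  apply: (enlargeS _ _ _ (@subsetUr _ _ _)); apply: hd2; apply: fpS hy.
  by rewrite ge_min lexx orbT.
move=> h1 _ x Ax; rewrite /farthest_set Q2 ?heq //.
by case: (h1 x Ax) => y hy; exists y; left.
Qed.
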